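(* Let $|\psi_{{\sf A}{\sf B}}\rangle\in\mathbb C^{d_{\sf A}}\otimes\mathbb C^{d_{\sf B}}$ be a unit vector and $\bar\omega_{\sf A}=\mathrm{tr}_{\sf B}\big(S_{\sf B}|\psi_{{\sf A}{\sf B}}\rangle\langle\psi_{{\sf A}{\sf B}}|^{\otimes2}\big)+\frac{S_{\sf A}}{\mathrm{tr}S_{\sf A}}\,\mathrm{tr}\big(A_{\sf A}A_{\sf B}|\psi_{{\sf A}{\sf B}}\rangle\langle\psi_{{\sf A}{\sf B}}|^{\otimes2}\big)$. Then $\bar\omega_{\sf A}$ belongs to the convex hull of $\{|\phi\rangle\langle\phi|^{\otimes2}:\phi\in\mathbb C^{d_{\sf A}},\ \|\phi\|=1\}$.
   Context: $|\psi_{{\sf A}{\sf B}}\rangle^{\otimes2}$ is regarded as a vector in $\mathbb C^{d_{\sf A}}_1\otimes\mathbb C^{d_{\sf B}}_2\otimes\mathbb C^{d_{\sf A}}_3\otimes\mathbb C^{d_{\sf B}}_4$; $\mathrm{tr}_{\sf B}$ is the partial trace over factors $2,4$. $S_{\sf A}$, $A_{\sf A}$ are the projectors onto the symmetric and antisymmetric subspaces of $\mathbb C^{d_{\sf A}}_1\otimes\mathbb C^{d_{\sf A}}_3$; $S_{\sf B}$, $A_{\sf B}$ those of $\mathbb C^{d_{\sf B}}_2\otimes\mathbb C^{d_{\sf B}}_4$ (extended by identities where needed). *)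

(* Defs.v *)
(* Complex scalars: any numClosedFieldType C (instantiated
   in the theorem with C := R[i] for R : realType, i.e. the complex numbers). *)
From HB Require Import structures.
From mathcomp Require Import all_boot all_order all_algebra.
From mathcomp Require Import complex.
From mathcomp Require Import reals.
Set Implicit Arguments. Unset Strict Implicit. Unset Printing Implicit Defensive.
Import Order.TTheory GRing.Theory Num.Theory.
Local Open Scope ring_scope.

Section QDefs.
Variable C : numClosedFieldType.

Definition op (T : finType) := T -> T -> C.

Definition opmul (T : finType) (P Q : op T) : op T :=
  fun x y => \sum_(z : T) P x z * Q z y.

Definition optr (T : finType) (P : op T) : C := \sum_(x : T) P x x.

Definition delta (T : finType) (x y : T) : C := (x == y)%:R.

Definition outer (T : finType) (v : T -> C) : op T := fun x y => v x * (v y)^*.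

Definition tsq (T : finType) (v : T -> C) : (T * T)%type -> C :=
  fun x => v x.1 * v x.2.

Variables dA dB : nat.
Definition IA := 'I_dA.
Definition IB := 'I_dB.
Definition T_AB := (IA * IB)%type.
(* (C^{dA}_1 (x) C^{dB}_2) (x) (C^{dA}_3 (x) C^{dB}_4), indexed by ((a1,b2),(a3,b4)) *)
Definition T4 := (T_AB * T_AB)%type.
Definition T_AA := (IA * IA)%type.

(* swap of factors 2 and 4 (the B copies) *)
Definition swapB (x : T4) : T4 := ((x.1.1, x.2.2), (x.2.1, x.1.2)).
(* swap of factors 1 and 3 (the A copies) *)
Definition swapA (x : T4) : T4 := ((x.2.1, x.1.2), (x.1.1, x.2.2)).
Definition swap2 (x : T_AA) : T_AA := (x.2, x.1).

Definition FB : op T4 := fun x y => delta x (swapB y).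
Definition FA : op T4 := fun x y => delta x (swapA y).
Definition FAA : op T_AA := fun x y => delta x (swap2 y).

Definition SB : op T4 := fun x y => (delta x y + FB x y) / 2%:R.
Definition AB : op T4 := fun x y => (delta x y - FB x y) / 2%:R.
Definition AA : op T4 := fun x y => (delta x y - FA x y) / 2%:R.
Definition SA2 : op T_AA := fun x y => (delta x y + FAA x y) / 2%:R.

Definition ptrB (M : op T4) : op T_AA :=
  fun x y => \sum_(b2 : IB) \sum_(b4 : IB) M ((x.1, b2), (x.2, b4)) ((y.1, b2), (y.2, b4)).

Definition Psi2 (psi : T_AB -> C) : op T4 := outer (tsq psi).

Definition omegaA (psi : T_AB -> C) : op T_AA :=
  fun x y => ptrB (opmul SB (Psi2 psi)) x y
             + SA2 x y / optr SA2 * optr (opmul (opmul AA AB) (Psi2 psi)).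

Definition unit_vec (T : finType) (v : T -> C) : Prop := \sum_(x : T) `|v x| ^+ 2 = 1.

Definition in_conv_sym_products (W : op T_AA) : Prop :=
  exists (n : nat) (w : 'I_n -> C) (phi : 'I_n -> IA -> C),
    [/\ forall i, 0 <= w i,
        \sum_(i < n) w i = 1,
        forall i, unit_vec (phi i)
      & forall x y, W x y = \sum_(i < n) w i * outer (tsq (phi i)) x y].

End QDefs.

(* Main.v *)
Require Import Defs.
From mathcomp Require Import all_boot all_order all_algebra.
From mathcomp Require Import complex.
From mathcomp Require Import reals.
From mathcomp Require Import ring.
Set Implicit Arguments. Unset Strict Implicit. Unset Printing Implicit Defensive.
Import Order.TTheory GRing.Theory Num.Theory.
Local Open Scope ring_scope.

Section Gen.
Variable C : numClosedFieldType.

Lemma geo4 (p q : nat) : (p <= 2)%N -> (q <= 2)%N ->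
  \sum_(t < 4) (('i : C) ^+ p * (- 'i) ^+ q) ^+ t = if p == q then 4%:R else 0.
Proof.
have i2 : ('i : C) * 'i = -1 by rewrite -expr2 sqrCi.
have key : forall z : C, \sum_(t < 4) z ^+ t = (1 + z) * (1 + z * z).
  move=> z; rewrite !big_ord_recr big_ord0 /=; ring.
case: p => [|[|[|p]]] // _; case: q => [|[|[|q]]] // _; rewrite /= key;
  rewrite ?expr0 ?expr1 ?expr2;
  do 4 rewrite ?(mul1r, mulr1, mulN1r, mulrN1, mulNr, mulrN, opprK, i2); ring.
Qed.

Definition w4 (t : 'I_4) : C := 'i ^+ t.

Lemma prod1 (I : finType) (f : I -> C) b : \prod_k f k ^+ (b == k) = f b.
Proof.
rewrite (bigD1 b) //= eqxx big1 ?mulr1 // => k /negbTE; rewrite eq_sym => ->.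
by rewrite expr0.
Qed.

Lemma comb4 (I : finType) (b1 b2 b3 b4 : I) :
  [forall k, ((b1 == k) + (b2 == k) == (b3 == k) + (b4 == k))%N] =
  ((b1 == b3) && (b2 == b4)) || ((b1 == b4) && (b2 == b3)).
Proof.
apply/forallP/idP.
  move=> H; have H1 := H b1; have H2 := H b2; clear H.
  move: H1 H2; rewrite !eqxx.
  case: (eqVneq b2 b1) => [e21|n21]; case: (eqVneq b3 b1) => [e31|n31];
    case: (eqVneq b4 b1) => [e41|n41]; case: (eqVneq b3 b2) => [e32|n32]; case: (eqVneq b4 b2) => [e42|n42];
  rewrite ?(eq_sym b1 b2) ?(eq_sym b1 b3) ?(eq_sym b1 b4) ?(eq_sym b2 b3) ?(eq_sym b2 b4)
     ?e21 ?e31 ?e41 ?e32 ?e42 ?n21 ?n31 ?n41 ?n32 ?n42 ?eqxx ?orbT //=;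
  try (subst; rewrite ?eqxx in n21 n31 n41 n32 n42 *; done).
  all: try (move=> _ _; subst; rewrite ?eqxx in n21 n31 n41 n32 n42 e21 e31 e41 e32 e42 *; done).
  all: try (move=> _ _; repeat match goal with H : is_true (_ != _) |- _ => move/eqP: H => H end; congruence).
  case/orP => /andP [/eqP -> /eqP ->] k //.
  by rewrite addnC.
Qed.


Lemma char_sum (I : finType) (b1 b2 b3 b4 : I) :
  \sum_(th : {ffun I -> 'I_4}) w4 (th b1) * w4 (th b2) * (w4 (th b3))^* * (w4 (th b4))^* =
  (4 ^ #|I|)%:R * ( ((b1==b3)&&(b2==b4))%:R + ((b1==b4)&&(b2==b3))%:R
                   - ((b1==b2)&&(b1==b3)&&(b1==b4))%:R ).
Proof.
pose p k := ((b1 == k) + (b2 == k))%N.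
pose q k := ((b3 == k) + (b4 == k))%N.
pose z k := ('i : C) ^+ p k * (- 'i) ^+ q k.
transitivity (\sum_(th : {ffun I -> 'I_4}) \prod_k z k ^+ th k).
  apply: eq_bigr => th _.
  have E : forall k, z k ^+ th k = (w4 (th k)) ^+ (b1 == k) * (w4 (th k)) ^+ (b2 == k)
        * (w4 (th k))^* ^+ (b3 == k) * (w4 (th k))^* ^+ (b4 == k).
    move=> k; rewrite /z /w4 exprMn -!exprM mulnC exprM mulnC exprM /p /q !exprD.
    by rewrite rmorphXn /= conjCi !mulrA !exprM.
  by rewrite (eq_bigr _ (fun k _ => E k)) !big_split /= !prod1.
rewrite -(bigA_distr_bigA (fun k (t : 'I_4) => z k ^+ t)) /=.
rewrite (eq_bigr (fun k => if p k == q k then 4%:R else 0)); last first.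
  have le2 : forall x y : bool, (x + y <= 2)%N by do 2 case.
  by move=> k _; rewrite geo4 ?le2.
have -> : \prod_k (if p k == q k then 4%:R else 0 : C) =
          if [forall k, p k == q k] then (4 ^ #|I|)%:R else 0.
  case: ifP => [/forallP H|/negbT]; last first.
    rewrite negb_forall => /existsP [k /negbTE Hk].
    by rewrite (bigD1 k) //= Hk mul0r.
  rewrite (eq_bigr (fun _ => 4%:R)) => [|k _]; last by rewrite H.
  by rewrite prodr_const natrX cardE.
rewrite comb4.
case: (eqVneq b1 b3) => [e13|n13]; case: (eqVneq b2 b4) => [e24|n24];
  case: (eqVneq b1 b4) => [e14|n14]; case: (eqVneq b2 b3) => [e23|n23];
  case: (eqVneq b1 b2) => [e12|n12]; rewrite /= ?mulr1 ?mulr0 ?addr0 ?subr0 ?add0r ?addrK //.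
all: try (exfalso; repeat match goal with H : is_true (_ != _) |- _ => move/eqP: H => H end; congruence).
all: by rewrite ?mulr1 ?mulr0.
Qed.

Lemma sum_delta (I : finType) (b0 : I) (f : I -> C) :
  \sum_b (b0 == b)%:R * f b = f b0.
Proof.
rewrite (bigD1 b0) //= eqxx mul1r big1 ?addr0 // => b /negbTE.
by rewrite eq_sym => ->; rewrite mul0r.
Qed.

Lemma inner4 (I : finType) (f : I -> I -> C) b1 b2 :
  \sum_b3 \sum_b4 ( ((b1==b3)&&(b2==b4))%:R + ((b1==b4)&&(b2==b3))%:R
                   - ((b1==b2)&&(b1==b3)&&(b1==b4))%:R ) * f b3 b4
  = f b1 b2 + f b2 b1 - (b1 == b2)%:R * f b1 b1.
Proof.
have E : forall b3 b4, ( ((b1==b3)&&(b2==b4))%:R + ((b1==b4)&&(b2==b3))%:R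
                   - ((b1==b2)&&(b1==b3)&&(b1==b4))%:R ) * f b3 b4 =
   (b1==b3)%:R * ((b2==b4)%:R * f b3 b4) + (b2==b3)%:R * ((b1==b4)%:R * f b3 b4)
   - (b1==b2)%:R * ((b1==b3)%:R * ((b1==b4)%:R * f b3 b4)).
  move=> b3 b4; rewrite -!mulnb !natrM; ring.
under eq_bigr => b3 _ do (under eq_bigr => b4 _ do rewrite E; rewrite sumrB big_split /= -!mulr_sumr !sum_delta).
rewrite sumrB big_split /= -!mulr_sumr !sum_delta.
by [].
Qed.

Lemma conj_sum (I : finType) (f : I -> C) : (\sum_i f i)^* = \sum_i (f i)^*.
Proof. by rewrite rmorph_sum. Qed.
Lemma conjM (a b : C) : (a * b)^* = a^* * b^*.
Proof. by rewrite rmorphM. Qed.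

Definition phiv (I J : finType) (v : I -> J -> C) (th : {ffun I -> 'I_4}) : J -> C :=
  fun a => \sum_b w4 (th b) * v b a.

Definition X4 (I J : finType) (v : I -> J -> C) (x y : (J * J)%type) b1 b2 b3 b4 :=
  v b1 x.1 * v b2 x.2 * (v b3 y.1)^* * (v b4 y.2)^*.

Lemma sum4 (I : finType) (f1 f2 f3 f4 : I -> C) :
  (\sum_b f1 b) * (\sum_b f2 b) * (\sum_b f3 b) * (\sum_b f4 b) =
  \sum_b1 \sum_b2 \sum_b3 \sum_b4 f1 b1 * f2 b2 * f3 b3 * f4 b4.
Proof.
rewrite !big_distrl /=; apply: eq_bigr => b1 _.
rewrite [f1 b1 * _]big_distrr /= !big_distrl /=; apply: eq_bigr => b2 _.
rewrite [_ * (\sum_b f3 b)]big_distrr /= !big_distrl /=; apply: eq_bigr => b3 _.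
by rewrite big_distrr /=.
Qed.

Lemma Ev (I J : finType) (v : I -> J -> C) x y :
  \sum_th outer (tsq (phiv v th)) x y =
  (4 ^ #|I|)%:R * (\sum_b1 \sum_b2 (X4 v x y b1 b2 b1 b2 + X4 v x y b1 b2 b2 b1)
                  - \sum_b X4 v x y b b b b).
Proof.
transitivity (\sum_(th : {ffun I -> 'I_4}) \sum_b1 \sum_b2 \sum_b3 \sum_b4
   (w4 (th b1) * w4 (th b2) * (w4 (th b3))^* * (w4 (th b4))^*) * X4 v x y b1 b2 b3 b4).
  apply: eq_bigr => th _.
  rewrite /outer /tsq /phiv conjM !conj_sum mulrA sum4.
  have E : forall b1 b2 b3 b4, w4 (th b1) * v b1 x.1 * (w4 (th b2) * v b2 x.2) *
        (w4 (th b3) * v b3 y.1)^* * (w4 (th b4) * v b4 y.2)^* =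
        w4 (th b1) * w4 (th b2) * (w4 (th b3))^* * (w4 (th b4))^* * X4 v x y b1 b2 b3 b4.
    by move=> b1 b2 b3 b4; rewrite /X4 !conjM; ring.
  under eq_bigr => b1 _ do under eq_bigr => b2 _ do under eq_bigr => b3 _ do
     under eq_bigr => b4 _ do rewrite E.
  by [].
rewrite exchange_big /=.
under eq_bigr => b1 _ do (rewrite exchange_big /=; under eq_bigr => b2 _ do
  (rewrite exchange_big /=; under eq_bigr => b3 _ do
    (rewrite exchange_big /=; under eq_bigr => b4 _ do rewrite -mulr_suml char_sum -mulrA))).
under eq_bigr => b1 _ do under eq_bigr => b2 _ do
  (under eq_bigr => b3 _ do rewrite -mulr_sumr; rewrite -mulr_sumr inner4).
under eq_bigr => b1 _ do rewrite -mulr_sumr.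
rewrite -mulr_sumr /=; congr (_ * _).
under eq_bigr => b1 _ do rewrite sumrB.
rewrite sumrB; congr (_ - _).
by apply: eq_bigr => b1 _; rewrite sum_delta.
Qed.

Lemma conjB (a b : C) : (a - b)^* = a^* - b^*.
Proof. by rewrite rmorphB. Qed.

Lemma conjV (a : C) : (a^-1)^* = (a^*)^-1.
Proof. by rewrite fmorphV. Qed.

Variable d : nat.

Definition cone (W : op C (T_AA d)) := exists N (c : 'I_N -> C) (f : 'I_N -> IA d -> C),
  (forall i, 0 <= c i) /\ forall x y, W x y = \sum_i c i * outer (tsq (f i)) x y.

Lemma cone_fin (J : finType) (c : J -> C) (f : J -> IA d -> C) (W : op C (T_AA d)) :
  (forall j, 0 <= c j) -> (forall x y, W x y = \sum_j c j * outer (tsq (f j)) x y) -> cone W.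
Proof.
move=> c0 HW; exists #|J|, (fun i => c (enum_val i)), (fun i => f (enum_val i)).
split => // x y; rewrite HW.
by rewrite -(big_enum_val (A := J) (fun j => c j * outer (tsq (f j)) x y)); apply: eq_bigl => j; rewrite inE.
Qed.

Lemma cone_add (W1 W2 : op C (T_AA d)) : cone W1 -> cone W2 -> cone (fun x y => W1 x y + W2 x y).
Proof.
move=> [N1 [c1 [f1 [c10 H1]]]] [N2 [c2 [f2 [c20 H2]]]].
apply: (@cone_fin ('I_N1 + 'I_N2)%type
  (fun j => match j with inl a => c1 a | inr b => c2 b end)
  (fun j => match j with inl a => f1 a | inr b => f2 b end)).
  by case.
by move=> x y; rewrite big_sumType /= H1 H2.
Qed.

Lemma cone_scale (a : C) (W : op C (T_AA d)) : 0 <= a -> cone W -> cone (fun x y => a * W x y).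
Proof.
move=> a0 [N [c [f [c0 H]]]]; exists N, (fun i => a * c i), f; split.
  by move=> i; rewrite mulr_ge0.
by move=> x y; rewrite H mulr_sumr; apply: eq_bigr => i _; rewrite mulrA.
Qed.

Lemma trQ (T : finType) (f : T -> C) :
  \sum_(x : (T * T)%type) outer (tsq f) x x = (\sum_a `|f a| ^+ 2) ^+ 2.
Proof.
rewrite expr2 mulr_suml.
rewrite (eq_bigr (fun a => \sum_b `|f a| ^+ 2 * `|f b| ^+ 2)); last first.
  by move=> a _; rewrite mulr_sumr.
rewrite (pair_bigA _ (fun a b => `|f a| ^+ 2 * `|f b| ^+ 2)) /=.
by apply: eq_bigr => [[a b]] _; rewrite /outer /tsq /= conjM !normCK; ring.
Qed.

Lemma cone_conv (W : op C (T_AA d)) : (0 < d)%N -> cone W -> optr W = 1 ->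
  in_conv_sym_products W.
Proof.
move=> d0 [N [c [f [c0 HW]]]] tr1.
pose s i := \sum_a `|f i a| ^+ 2.
have s0 : forall i, 0 <= s i by move=> i; apply: sumr_ge0 => a _; rewrite exprn_ge0.
pose r i := sqrtC (s i).
have r0 : forall i, 0 <= r i by move=> i; rewrite sqrtC_ge0.
have rs : forall i, r i ^+ 2 = s i by move=> i; rewrite sqrtCK.
pose a0 : IA d := Ordinal d0.
pose g i := if s i == 0 then (fun a => (a0 == a)%:R) else (fun a => f i a / r i).
exists N, (fun i => c i * s i ^+ 2), g; split.
- by move=> i; rewrite mulr_ge0 ?exprn_ge0.
- rewrite -tr1 /optr.
  rewrite (eq_bigr (fun x => \sum_i c i * outer (tsq (f i)) x x)); last by move=> x _; rewrite HW.
  rewrite exchange_big /=; apply: eq_bigr => i _.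
  by rewrite -mulr_sumr trQ.
- move=> i; rewrite /unit_vec /g; case: ifP => [_|/negbT si].
    rewrite (bigD1 a0) //= normr1 expr1n big1 ?addr0 // => a /negbTE.
    by rewrite eq_sym => ->; rewrite normr0 expr0n.
  have ri : r i != 0 by apply: contra si => /eqP r0'; rewrite -rs r0' expr0n.
  rewrite (eq_bigr (fun a => `|f i a| ^+ 2 / s i)); last first.
    move=> a _; rewrite normrM normfV expr_div_n (ger0_norm (r0 i)) rs //.
  by rewrite -mulr_suml divff.
- move=> x y; rewrite HW; apply: eq_bigr => i _; rewrite /g.
  case: ifP => [/eqP si|/negbT si].
    have fi : forall a, f i a = 0.
      move=> a; have := @psumr_eq0P C (IA d) xpredT (fun a => `|f i a| ^+ 2) (fun a _ => exprn_ge0 2 (normr_ge0 (f i a))) si a isT.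
      by move/eqP; rewrite expf_eq0 /= normr_eq0 => /eqP.
    by rewrite si expr0n /= mulr0 mul0r /outer /tsq !fi !mul0r mulr0.
  have ri : r i != 0 by apply: contra si => /eqP r0'; rewrite -rs r0' expr0n.
  rewrite -rs /outer /tsq !conjM !conjV (geC0_conj (r0 i)).
  by field.
Qed.
End Gen.

Section Main.
Variable C : numClosedFieldType.
Variables dA dB : nat.
Variable psi : T_AB dA dB -> C.

Lemma swapB_inv : involutive (@swapB dA dB). Proof. by case=> [[a b] [c e]]. Qed.
Lemma swapA_inv : involutive (@swapA dA dB). Proof. by case=> [[a b] [c e]]. Qed.

Lemma sum_pm (T : finType) (h : T -> T) (hK : involutive h) (z : T) (g : T -> C) :
  \sum_u (delta C z u + delta C z (h u)) / 2%:R * g u = (g z + g (h z)) / 2%:R.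
Proof.
rewrite (eq_bigr (fun u => delta C z u * (g u / 2%:R) + delta C z (h u) * (g u / 2%:R))); last first.
  by move=> u _; ring.
rewrite big_split /= [X in _ + X](reindex_inj (inv_inj hK)) /=.
rewrite [X in _ + X](eq_bigr (fun u => delta C z u * (g (h u) / 2%:R))); last by move=> u _; rewrite hK.
rewrite /delta !sum_delta.
by rewrite mulrDl.
Qed.

Lemma sum_mp (T : finType) (h : T -> T) (hK : involutive h) (z : T) (g : T -> C) :
  \sum_u (delta C z u - delta C z (h u)) / 2%:R * g u = (g z - g (h z)) / 2%:R.
Proof.
rewrite (eq_bigr (fun u => delta C z u * (g u / 2%:R) - delta C z (h u) * (g u / 2%:R))); last first.
  by move=> u _; ring.
rewrite sumrB /= [X in _ - X](reindex_inj (inv_inj hK)) /=.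
rewrite [X in _ - X](eq_bigr (fun u => delta C z u * (g (h u) / 2%:R))); last by move=> u _; rewrite hK.
rewrite /delta !sum_delta.
by rewrite mulrBl.
Qed.

Lemma F1E x y : ptrB (opmul (@SB C dA dB) (Psi2 psi)) x y =
  \sum_b2 \sum_b4 (Psi2 psi ((x.1,b2),(x.2,b4)) ((y.1,b2),(y.2,b4))
     + Psi2 psi (swapB ((x.1,b2),(x.2,b4))) ((y.1,b2),(y.2,b4))) / 2%:R.
Proof.
rewrite /ptrB; apply: eq_bigr => b2 _; apply: eq_bigr => b4 _.
by rewrite /opmul /SB /FB (sum_pm swapB_inv).
Qed.


Definition vB : IB dB -> IA dA -> C := fun b a => psi (a, b).

Lemma F1H x y : ptrB (opmul (@SB C dA dB) (Psi2 psi)) x y =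
  (\sum_b1 \sum_b2 (X4 vB x y b1 b2 b1 b2 + X4 vB x y b1 b2 b2 b1)) / 2%:R.
Proof.
transitivity ((\sum_b2 \sum_b4 X4 vB x y b2 b4 b2 b4 + \sum_b2 \sum_b4 X4 vB x y b4 b2 b2 b4) / 2%:R).
  rewrite F1E mulrDl !mulr_suml -big_split /=; apply: eq_bigr => b2 _.
  rewrite !mulr_suml -big_split /=; apply: eq_bigr => b4 _.
  by rewrite /Psi2 /outer /tsq /X4 /vB /swapB /= !conjM; ring.
rewrite [X in _ + X]exchange_big -big_split /=; congr (_ / _).
by apply: eq_bigr => b1 _; rewrite -big_split.
Qed.

Definition uA : IA dA -> IA dA -> C := fun a a' => (a == a')%:R.

Lemma sum_delta2 (T : finType) (x1 x2 : T) (F : T -> T -> C) :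
  \sum_a \sum_b (x1 == a)%:R * ((x2 == b)%:R * F a b) = F x1 x2.
Proof.
rewrite (eq_bigr (fun a => (x1 == a)%:R * \sum_b (x2 == b)%:R * F a b)).
  by rewrite sum_delta sum_delta.
by move=> a _; rewrite mulr_sumr.
Qed.

Lemma SA2H x y : @SA2 C dA x y =
  (\sum_a1 \sum_a2 (X4 uA x y a1 a2 a1 a2 + X4 uA x y a1 a2 a2 a1)) / 2%:R.
Proof.
case: x => x1 x2; case: y => y1 y2.
rewrite (eq_bigr (fun a1 => \sum_a2 ((x1 == a1)%:R * ((x2 == a2)%:R * ((a1 == y1)%:R * (a2 == y2)%:R))
    + (x1 == a1)%:R * ((x2 == a2)%:R * ((a2 == y1)%:R * (a1 == y2)%:R))))); last first.
  move=> a1 _; apply: eq_bigr => a2 _.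
  rewrite /X4 /uA /= !rmorph_nat (eq_sym a1 x1) (eq_sym a2 x2); ring.
under eq_bigr => a1 _ do rewrite big_split /=.
rewrite big_split /= !sum_delta2.
rewrite /SA2 /delta /FAA /delta /swap2 /= !xpair_eqE -!mulnb !natrM.
congr (_ / _); ring.
Qed.

Lemma Psym1 z w : Psi2 psi (swapA z) w = Psi2 psi (swapB z) w.
Proof. by case: z => [[a b] [c e]]; rewrite /Psi2 /outer /tsq /= (mulrC (psi (c, b))). Qed.

Lemma Psym2 z w : Psi2 psi (swapB (swapA z)) w = Psi2 psi z w.
Proof. by case: z => [[a b] [c e]]; rewrite /Psi2 /outer /tsq /= (mulrC (psi (c, e))). Qed.

Definition Kt := optr (opmul (opmul (@AA C dA dB) (@AB C dA dB)) (Psi2 psi)).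

Lemma KE : Kt = (\sum_z (Psi2 psi z z - Psi2 psi (swapB z) z)) / 2%:R.
Proof.
rewrite /Kt /optr mulr_suml; apply: eq_bigr => x _.
rewrite /opmul.
rewrite (eq_bigr (fun w => ((delta C x w - delta C x (swapB w)) / 2%:R * (Psi2 psi w x / 2%:R)
   - (delta C (swapA x) w - delta C (swapA x) (swapB w)) / 2%:R * (Psi2 psi w x / 2%:R)))); last first.
  move=> w _; rewrite /AA /FA (sum_mp swapA_inv) /AB /FB.
  by ring.
rewrite sumrB !(sum_mp swapB_inv) Psym1 Psym2.
by field.
Qed.

Lemma sumB (F : T4 dA dB -> C) : \sum_z F z = \sum_z F (swapB z).
Proof. exact: (reindex_inj (inv_inj swapB_inv)). Qed.

Lemma K_ge0 : 0 <= Kt.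
Proof.
have -> : Kt = (\sum_z `|tsq psi z - tsq psi (swapB z)| ^+ 2) / 4%:R.
  rewrite KE [in RHS](eq_bigr (fun z => tsq psi z * (tsq psi z)^* - tsq psi z * (tsq psi (swapB z))^*
     - tsq psi (swapB z) * (tsq psi z)^* + tsq psi (swapB z) * (tsq psi (swapB z))^*)); last first.
    by move=> z _; rewrite normCK conjB; ring.
  rewrite sumrB [in RHS]big_split /= !sumrB.
  have E1 : \sum_z tsq psi (swapB z) * (tsq psi (swapB z))^* = \sum_z tsq psi z * (tsq psi z)^*.
    by rewrite [RHS]sumB.
  have E2 : \sum_z tsq psi z * (tsq psi (swapB z))^* = \sum_z tsq psi (swapB z) * (tsq psi z)^*.
    by rewrite sumB; apply: eq_bigr => z _; rewrite swapB_inv.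
  rewrite E1 E2 /Psi2 /outer.
  by field.
by apply: divr_ge0; [apply: sumr_ge0 => z _; rewrite exprn_ge0 | rewrite ler0n].
Qed.

Lemma pair_sum (T1 T2 : finType) (H : (T1 * T2)%type -> C) : \sum_p H p = \sum_a \sum_b H (a, b).
Proof. by rewrite pair_bigA; apply: eq_bigr => [[]]. Qed.

Lemma sum_T4 (G : T4 dA dB -> C) :
  \sum_(x : T_AA dA) \sum_(b2 : IB dB) \sum_(b4 : IB dB) G ((x.1, b2), (x.2, b4)) = \sum_z G z.
Proof.
rewrite [LHS]pair_sum [RHS]pair_sum [RHS]pair_sum.
apply: eq_bigr => a1 _ /=; rewrite exchange_big; apply: eq_bigr => b2 _ /=.
by rewrite [RHS]pair_sum.
Qed.

Lemma trF1 : \sum_x ptrB (opmul (@SB C dA dB) (Psi2 psi)) x x =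
  (\sum_z (Psi2 psi z z + Psi2 psi (swapB z) z)) / 2%:R.
Proof.
rewrite mulr_suml -(sum_T4 (fun z => (Psi2 psi z z + Psi2 psi (swapB z) z) / 2%:R)).
by apply: eq_bigr => x _; rewrite F1E.
Qed.

Lemma trS_gt0 : (0 < dA)%N -> 0 < optr (@SA2 C dA).
Proof.
move=> d0; pose a0 : IA dA := Ordinal d0.
rewrite /optr (bigD1 (a0, a0)) //=; apply: ltr_wpDr.
  apply: sumr_ge0 => x _; rewrite /SA2 /FAA /delta eqxx.
  by apply: divr_ge0; rewrite ?addr_ge0 ?ler0n.
rewrite /SA2 /FAA /delta /swap2 /=.
by apply: divr_gt0; [apply: addr_gt0; exact: ltr01 | exact: ltr0Sn].
Qed.

Lemma Dv_outer (I J : finType) (v : I -> J -> C) x y :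
  \sum_b outer (tsq (v b)) x y = \sum_b X4 v x y b b b b.
Proof. by apply: eq_bigr => b _; rewrite /outer /tsq /X4 conjM !mulrA. Qed.

Lemma cone_ext (W W' : op C (T_AA dA)) : cone W -> (forall x y, W' x y = W x y) -> cone W'.
Proof.
move=> [N [c [f [c0 H]]]] E; exists N, c, f; split => // x y; by rewrite E H.
Qed.

Lemma main_gen : unit_vec psi -> in_conv_sym_products (omegaA psi).
Proof.
move=> upsi.
have dA0 : (0 < dA)%N.
  case: (posnP dA) => // d0; move: upsi; rewrite /unit_vec big1 => [/eqP|[a b] _].
    by rewrite eq_sym oner_eq0.
  by exfalso; case: a => m Hm; move: Hm; rewrite d0.
have trS0 := trS_gt0 dA0.
have trSn0 : optr (@SA2 C dA) != 0 by rewrite gt_eqF.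
have Kge := K_ge0.
have n0 : forall n, ((4 ^ n)%:R : C) != 0 by move=> n; rewrite pnatr_eq0 expn_eq0.
apply: cone_conv dA0 _ _.
  pose W1 x y := \sum_(th : {ffun IB dB -> 'I_4}) ((4 ^ #|IB dB|)%:R * 2%:R)^-1 * outer (tsq (phiv vB th)) x y.
  pose W2 x y := \sum_(b : IB dB) (2%:R)^-1 * outer (tsq (vB b)) x y.
  pose W3 x y := \sum_(th : {ffun IA dA -> 'I_4}) ((4 ^ #|IA dA|)%:R * 2%:R)^-1 * outer (tsq (phiv uA th)) x y.
  pose W4 x y := \sum_(a : IA dA) (2%:R)^-1 * outer (tsq (uA a)) x y.
  have c1 : 0 <= ((4 ^ #|IB dB|)%:R * 2%:R : C)^-1 by rewrite invr_ge0 mulr_ge0 ?ler0n.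
  have c3 : 0 <= ((4 ^ #|IA dA|)%:R * 2%:R : C)^-1 by rewrite invr_ge0 mulr_ge0 ?ler0n.
  have c2 : 0 <= (2%:R : C)^-1 by rewrite invr_ge0 ler0n.
  apply: (cone_ext (W := fun x y => (W1 x y + W2 x y) + Kt / optr (@SA2 C dA) * (W3 x y + W4 x y))).
    have C1 : cone W1.
      by apply: (cone_fin (J := {ffun IB dB -> 'I_4}) (c := fun _ => ((4 ^ #|IB dB|)%:R * 2%:R : C)^-1) (f := phiv vB) (fun _ => c1)).
    have C2 : cone W2.
      by apply: (cone_fin (J := IB dB) (c := fun _ => (2%:R : C)^-1) (f := vB) (fun _ => c2)).
    have C3 : cone W3.
      by apply: (cone_fin (J := {ffun IA dA -> 'I_4}) (c := fun _ => ((4 ^ #|IA dA|)%:R * 2%:R : C)^-1) (f := phiv uA) (fun _ => c3)).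
    have C4 : cone W4.
      by apply: (cone_fin (J := IA dA) (c := fun _ => (2%:R : C)^-1) (f := uA) (fun _ => c2)).
    apply: cone_add; first exact: cone_add.
    apply: cone_scale; first by apply: divr_ge0 => //; exact: ltW.
    exact: cone_add.
  move=> x y; rewrite /omegaA -/Kt F1H SA2H /W1 /W2 /W3 /W4 -!mulr_sumr !Ev !Dv_outer.
  rewrite !card_ord.
  by field; rewrite !n0 trSn0.
rewrite /omegaA -/Kt {1}/optr big_split /= trF1 -!mulr_suml.
have -> : (\sum_(i : T_AA dA) (delta C i i + FAA C i i)) / 2%:R = optr (@SA2 C dA) by rewrite /optr /SA2 mulr_suml.
rewrite divff // mul1r KE.
rewrite big_split sumrB /=.
have -> : \sum_z Psi2 psi z z = 1 by rewrite /Psi2 trQ upsi expr1n.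
by field.
Qed.

End Main.

Unset Implicit Arguments.

Theorem mainTheorem10 (R : realType) (dA dB : nat) (psi : T_AB dA dB -> R[i]) :
  unit_vec psi -> in_conv_sym_products (omegaA psi).
Proof.
exact: (@main_gen (R[i]) dA dB psi).
Qed.
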